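(* The Max-Egal objective is strategyproof against a manipulator $m^+$ (one who can only add edges) over directed networks. That is, for every $k$, every directed social network $G$, every agent $m$ and every manipulation in which $m$ adds outgoing edges $(m,a)\notin E$ (yielding $G^m$), we have \[\min_{P\in O(G^m)} u(m,P)\le\min_{P\in O(G)} u(m,P)\quad\text{and}\quad \max_{P\in O(G^m)} u(m,P)\le\max_{P\in O(G)} u(m,P),\] where $O(\cdot)$ denotes the set of Max-Egal solutions and $u(m,P)$ is computed in the true network $G$.
   Context: Let $A=\{a_1,\dots,a_n\}$ be a finite nonempty set of agents and $G=\langle A,E\rangle$ a directed graph without self-loops (the social network); $N(a)=\{b:(a,b)\in E\}$. For a coalition $C\subseteq A$ with $a\in C$, $u(a,C)=|C\cap N(a)|$. For $0<k\le n$, $\Pi_k$ is the set of partitions of $A$ into exactly $k$ nonempty coalitions; for $P\in\Pi_k$, $u(a,P)=u(a,C)$ where $C\in P$ contains $a$. The Max-Egal objective: $O(G)$ is the set of $P\in\Pi_k$ maximizing $\min_{a\in A}u(a,P)$ (utilities computed in the network in question). A manipulator $m$ of type $m^+$ in a directed network may add only outgoing edges $(m,a)\notin E$; incoming edges cannot be changed, so $N^m(a)=N(a)$ for all $a\ne m$, where $N^m$ is the neighbourhood in the reported network $G^m$. The utility $u(m,P)$ of the manipulator is always computed with respect to his true neighbours in the original $G$. *)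

(* Defs.v *)
From mathcomp Require Import all_boot.
Set Implicit Arguments. Unset Strict Implicit. Unset Printing Implicit Defensive.

Section Hedonic.
Variable T : finType.

Definition no_self_loops (E : rel T) : Prop := forall a, ~~ E a a.

Definition nbh (E : rel T) (a : T) : {set T} := [set b | E a b].

Definition util_coal (E : rel T) (a : T) (C : {set T}) : nat := #|C :&: nbh E a|.

Definition util (E : rel T) (a : T) (P : {set {set T}}) : nat :=
  util_coal E a (pblock P a).

(* Pi_k : partitions of A into exactly k nonempty coalitions
   (mathcomp's [partition] requires blocks nonempty, disjoint, covering). *)
Definition in_Pi (k : nat) (P : {set {set T}}) : bool :=
  partition P [set: T] && (#|P| == k).

(* egalitarian value min_a u(a,P) (A is nonempty whenever Pi_k is,
   and every utility is <= #|T|, so the neutral element is harmless) *)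
Definition egal (E : rel T) (P : {set {set T}}) : nat :=
  \big[minn/#|T|]_(a : T) util E a P.

Definition max_egal (E : rel T) (k : nat) (P : {set {set T}}) : bool :=
  in_Pi k P && [forall Q : {set {set T}}, in_Pi k Q ==> (egal E Q <= egal E P)].

Definition plus_manipulation (E : rel T) (m : T) (Em : rel T) : Prop :=
  no_self_loops Em /\
  (forall a b, a != m -> Em a b = E a b) /\
  (forall b, E m b -> Em m b).

Definition min_util_opt (Etrue Erep : rel T) (k : nat) (m : T) : nat :=
  \big[minn/#|T|]_(P | max_egal Erep k P) util Etrue m P.
Definition max_util_opt (Etrue Erep : rel T) (k : nat) (m : T) : nat :=
  \max_(P | max_egal Erep k P) util Etrue m P.

End Hedonic.

(* Main.v *)
Require Import Defs.
From mathcomp Require Import all_boot.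

Lemma geq_bigminn_seq (I : eqType) (r : seq I) (p : pred I) (F : I -> nat) c x :
  (x <= \big[minn/c]_(i <- r | p i) F i) =
  (x <= c) && all (fun i => p i ==> (x <= F i)) r.
Proof.
elim: r => [|a r IH]; first by rewrite big_nil andbT.
rewrite big_cons /=; case: (p a) => /=; last by rewrite IH.
by rewrite leq_min IH andbCA.
Qed.

Lemma geq_bigminn (I : finType) (p : pred I) (F : I -> nat) c x :
  x <= \big[minn/c]_(i | p i) F i <-> x <= c /\ (forall i, p i -> x <= F i).
Proof.
rewrite geq_bigminn_seq; split.
  case/andP=> -> /allP H; split=> // i pi.
  by have := H i (mem_index_enum i); rewrite pi.
case=> -> H; apply/allP=> i _; apply/implyP; exact: H.
Qed.

Lemma bigminn_le (I : finType) (p : pred I) (F : I -> nat) c j :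
  p j -> \big[minn/c]_(i | p i) F i <= F j.
Proof. by move=> pj; have [_ H] := proj1 (@geq_bigminn I p F c _) (leqnn _); apply: H. Qed.

Lemma bigminn_leT (I : finType) (p : pred I) (F : I -> nat) c :
  \big[minn/c]_(i | p i) F i <= c.
Proof. by have [H _] := proj1 (@geq_bigminn I p F c _) (leqnn _). Qed.

Section Proof.
Variables (T : finType) (E Em : rel T) (k : nat) (m : T).
Hypothesis HM : plus_manipulation E m Em.

Lemma util_le a P : util E a P <= #|T|.
Proof. exact: max_card. Qed.

Lemma egal_ge (E' : rel T) x P : x <= egal E' P <-> x <= #|T| /\ (forall a, x <= util E' a P).
Proof.
rewrite /egal; split.
  by move/geq_bigminn=> [H1 H2]; split=> // a; apply: H2.
by case=> H1 H2; apply/geq_bigminn; split=> // a _; apply: H2.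
Qed.

Lemma egal_le (E' : rel T) P a : egal E' P <= util E' a P.
Proof. by have [_ H] := proj1 (egal_ge E' (egal E' P) P) (leqnn _). Qed.

Lemma util_other a P : a != m -> util Em a P = util E a P.
Proof.
move=> am; rewrite /util /util_coal.
have -> : nbh Em a = nbh E a.
  by apply/setP=> b; rewrite !inE; case: HM => _ [H _]; rewrite H.
by [].
Qed.

Lemma util_mono a P : util E a P <= util Em a P.
Proof.
case: (eqVneq a m) => [->|am]; last by rewrite util_other.
rewrite /util /util_coal; apply: subset_leq_card; apply: setIS.
by apply/subsetP=> b; rewrite !inE; case: HM => _ [_ H]; apply: H.
Qed.

Lemma egal_mono P : egal E P <= egal Em P.
Proof.
apply/egal_ge; split; first by rewrite /egal bigminn_leT.
move=> a; apply: leq_trans (egal_le E P a) (util_mono a P).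
Qed.

Lemma max_egalP (E' : rel T) P :
  max_egal E' k P <-> in_Pi k P /\ forall Q, in_Pi k Q -> egal E' Q <= egal E' P.
Proof.
rewrite /max_egal; split.
  case/andP=> -> /forallP H; split=> // Q HQ; exact: (implyP (H Q) HQ).
case=> -> H; apply/forallP=> Q; apply/implyP; exact: H.
Qed.

Lemma exists_opt (E' : rel T) (Q0 : {set {set T}}) : in_Pi k Q0 -> exists P, max_egal E' k P.
Proof.
move=> HQ0; case: (arg_maxnP (egal E') HQ0) => P HP Hmax.
by exists P; apply/max_egalP; split.
Qed.

Lemma core P Q : max_egal Em k P -> max_egal E k Q ->
  util E m P <= egal E Q \/ (max_egal E k P /\ max_egal Em k Q).
Proof.
move=> /max_egalP [PP HP] /max_egalP [PQ HQ].
case: (leqP (util E m P) (egal E Q)) => [|lt]; first by left.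
right.
set y := egal Em P.
have w_le : minn y (util E m P) <= egal E P.
  apply/egal_ge; split; first by rewrite geq_min util_le orbT.
  move=> a; case: (eqVneq a m) => [->|am]; first by rewrite geq_min leqnn orbT.
  by rewrite -(util_other a P am) geq_min egal_le.
have := leq_trans w_le (HQ _ PP) => wv.
have yv : y <= egal E Q.
  move: wv; rewrite /minn; case: ifP => // _ H; move: lt; rewrite ltnNge H //.
have yP : y <= egal E P.
  move: w_le; rewrite /minn; case: ifP => // /negbT; rewrite -leqNgt => H1 H2.
  exact: leq_trans (leq_trans yv (ltnW lt)) H2.
split; apply/max_egalP; split => // R PR.
  apply: leq_trans (HQ _ PR) _; apply: leq_trans _ yP.
  apply: leq_trans (egal_mono Q) _; exact: HP.
apply: leq_trans (HP _ PR) _; apply: leq_trans yv (egal_mono Q).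
Qed.

End Proof.
Arguments core {T E Em k m} HM {P Q}.
Arguments exists_opt {T k} E' {Q0}.
Arguments max_egalP {T k E' P}.
Arguments egal_le {T E' P} a.
Arguments bigminn_le {I p F c j}.

Theorem theorem2 (T : finType) (E : rel T) (k : nat) (m : T) (Em : rel T) :
  no_self_loops E ->
  0 < k <= #|T| ->
  plus_manipulation E m Em ->
  min_util_opt E Em k m <= min_util_opt E E k m /\
  max_util_opt E Em k m <= max_util_opt E E k m.
Proof.
move=> _ _ HM; split.
  apply/geq_bigminn; split; first exact: bigminn_leT.
  move=> Q HQ; have [PQ _] := proj1 max_egalP HQ.
  have [P HP] := exists_opt Em PQ.
  case: (core HM HP HQ) => [H|[_ H]].
    apply: leq_trans (bigminn_le HP) (leq_trans H (egal_le _)).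
  exact: bigminn_le.
apply/bigmax_leqP => P HP.
have [PP _] := proj1 max_egalP HP.
have [Q HQ] := exists_opt E PP.
case: (core HM HP HQ) => [H|[H _]].
  apply: leq_trans (leq_trans H (egal_le _)) (leq_bigmax_cond _ HQ).
exact: leq_bigmax_cond.
Qed.
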